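(* Let $\lambda\in(\frac16,\frac56)$. For every $x_0\in[0,1]$, $h_{F^\lambda}(x_0)\le1$, and $h_{F^\lambda}(x_0)=1$ if $x_0\in\widetilde{\mathcal E}$.
   Context: Construction: $F^\lambda_0\equiv0$ on $[0,1]$. Given $F^\lambda_n$ with its $4^n$ closed intervals of generation $n$ (covering $[0,1]$, disjoint interiors, $F^\lambda_n$ affine on each), on each interval $[a,b]$ of generation $n$, with $\ell=b-a$ and slope $m$, $F^\lambda_{n+1}$ coincides with $F^\lambda_n$ at $a,a+\ell/3,a+2\ell/3,b$, equals $F^\lambda_n(a+\ell/2)+\lambda\ell\sqrt{1+m^2}$ at $a+\ell/2$, and is affine on $[a,a+\ell/3],[a+\ell/3,a+\ell/2],[a+\ell/2,a+2\ell/3],[a+2\ell/3,b]$. $F^\lambda=\lim_nF^\lambda_n$. Pointwise exponent: for bounded $f$, $f\in\mathcal C^\alpha(x_0)$ if there exist a polynomial $P$ of degree at most $\lfloor\alpha\rfloor$ and $C,\delta>0$ with $|f(x)-P(x-x_0)|\le C|x-x_0|^\alpha$ whenever $|x-x_0|<\delta$; $h_f(x_0)=\sup\{\alpha\ge0:f\in\mathcal C^\alpha(x_0)\}$. Dynamics: $T(x)=3x$ on $[0,\frac13)$, $6x-2$ on $[\frac13,\frac12)$, $4-6x$ on $[\frac12,\frac23)$, $3x-2$ on $[\frac23,1]$; $U(x)=0,1,2,3$ on these intervals; $u_n(x)=U(T^nx)$; $\beta_{1,2}(x,n)=\#\{k<n:u_k(x)\in\{1,2\}\}$. $\widetilde{\mathcal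 E}$ is the set of $x$ for which $(\beta_{1,2}(x,n))_n$ is eventually constant. *)

(* Defs.v *)
From Stdlib Require Import Reals List.
From Coquelicot Require Import Coquelicot.
Import ListNotations.
Open Scope R_scope.

(** A generation-n function is encoded by the sorted list of its nodes
    (x_i, F_n(x_i)), i = 0..4^n; F_n is affine between consecutive nodes. *)

Definition node := (R * R)%type.

(** Refinement of one generation interval [a,b] with values ya, yb:
    nodes a, a+l/3, a+l/2, a+2l/3 (b is produced by the next interval). *)
Definition refine_piece (lam : R) (p q : node) : list node :=
  let a := fst p in let ya := snd p in
  let b := fst q in let yb := snd q in
  let l := b - a in
  let m := (yb - ya) / l in
  [ (a, ya);
    (a + l / 3, ya + m * (l / 3));
    (a + l / 2, ya + m * (l / 2) + lam * l * sqrt (1 + m ^ 2));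
    (a + 2 * l / 3, ya + m * (2 * l / 3)) ].

Fixpoint refine (lam : R) (s : list node) : list node :=
  match s with
  | p :: ((q :: _) as t) => refine_piece lam p q ++ refine lam t
  | _ => s
  end.

Definition nodes (lam : R) (n : nat) : list node :=
  Nat.iter n (refine lam) [(0, 0); (1, 0)].

Fixpoint interp (s : list node) (x : R) : R :=
  match s with
  | p :: ((q :: _) as t) =>
      if Rle_dec x (fst q)
      then snd p + (snd q - snd p) / (fst q - fst p) * (x - fst p)
      else interp t x
  | _ => 0
  end.

Definition Flam_n (lam : R) (n : nat) (x : R) : R := interp (nodes lam n) x.

Definition in01 (x : R) : Prop := 0 <= x <= 1.

(** t^alpha for t >= 0, with 0^alpha = 0 (Stdlib's Rpower 0 alpha is 1). *)
Definition rpow0 (t alpha : R) : R := if Req_dec_T t 0 then 0 else Rpower t alpha.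

(** f ∈ C^alpha(x0): polynomial P of degree at most floor(alpha)
    (i.e. of the form sum_{k<=N} c_k t^k with N <= alpha), C, delta > 0 with
    |f x - P(x-x0)| <= C |x-x0|^alpha for x in [0,1] (domain of f), |x-x0| < delta. *)
Definition Calpha (f : R -> R) (alpha x0 : R) : Prop :=
  exists (N : nat) (c : nat -> R) (C delta : R),
    INR N <= alpha /\ 0 < C /\ 0 < delta /\
    forall x, in01 x -> Rabs (x - x0) < delta ->
      Rabs (f x - sum_f_R0 (fun k => c k * (x - x0) ^ k) N)
        <= C * rpow0 (Rabs (x - x0)) alpha.

Definition holder_exponent (f : R -> R) (x0 : R) : Rbar :=
  Lub_Rbar (fun alpha => 0 <= alpha /\ Calpha f alpha x0).

Definition Tmap (x : R) : R :=
  if Rlt_dec x (1/3) then 3 * x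
  else if Rlt_dec x (1/2) then 6 * x - 2
  else if Rlt_dec x (2/3) then 4 - 6 * x
  else 3 * x - 2.

Definition Umap (x : R) : nat :=
  if Rlt_dec x (1/3) then 0%nat
  else if Rlt_dec x (1/2) then 1%nat
  else if Rlt_dec x (2/3) then 2%nat
  else 3%nat.

Definition u (x : R) (n : nat) : nat := Umap (Nat.iter n Tmap x).

Fixpoint beta12 (x : R) (n : nat) : nat :=
  match n with
  | O => O
  | S k => (beta12 x k + (if orb (Nat.eqb (u x k) 1) (Nat.eqb (u x k) 2) then 1 else 0))%nat
  end.

Definition in_Etilde (x : R) : Prop :=
  exists N : nat, forall n : nat, (N <= n)%nat -> beta12 x n = beta12 x N.

(* Main.v *)
From Pilot Require Import Defs.
From Stdlib Require Import Reals.
From Coquelicot Require Import Coquelicot.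
From Stdlib Require Import Lra Psatz Lia List.
Import Pilot.Defs.
Import ListNotations.
Open Scope R_scope.

Definition ch1 (p q : node) : node :=
  (fst p + (fst q - fst p) / 3, snd p + (snd q - snd p) / (fst q - fst p) * ((fst q - fst p) / 3)).
Definition ch2 (lam : R) (p q : node) : node :=
  (fst p + (fst q - fst p) / 2, snd p + (snd q - snd p) / (fst q - fst p) * ((fst q - fst p) / 2)
    + lam * (fst q - fst p) * sqrt (1 + ((snd q - snd p) / (fst q - fst p)) ^ 2)).
Definition ch3 (p q : node) : node :=
  (fst p + 2 * (fst q - fst p) / 3, snd p + (snd q - snd p) / (fst q - fst p) * (2 * (fst q - fst p) / 3)).

Lemma rp_eq lam p q : refine_piece lam p q = [p; ch1 p q; ch2 lam p q; ch3 p q].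
Proof. destruct p as [a ya]; destruct q as [b yb]; reflexivity. Qed.

Definition L lam n (p q : node) := Nat.iter n (refine lam) [p; q].

Lemma refine_head lam e t : exists t', refine lam (e :: t) = e :: t'.
Proof.
  destruct t as [|q t].
  - exists []. reflexivity.
  - change (refine lam (e :: q :: t)) with (refine_piece lam e q ++ refine lam (q :: t)).
    rewrite rp_eq. eexists. reflexivity.
Qed.

Lemma refine_join lam s1 e t2 :
  refine lam (s1 ++ e :: t2) = refine lam (s1 ++ [e]) ++ tl (refine lam (e :: t2)).
Proof.
  induction s1 as [|p r IH].
  - change ([] ++ e :: t2) with (e :: t2); change ([] ++ [e]) with [e].
    destruct (refine_head lam e t2) as [t' Ht']. rewrite Ht'. reflexivity.
  - destruct r as [|q r'].
    + assert (E1 : refine lam (([p] ++ e :: t2)) = refine_piece lam p e ++ refine lam (e :: t2)) by reflexivity.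
      assert (E2 : refine lam ([p] ++ [e]) = refine_piece lam p e ++ [e]) by reflexivity.
      rewrite E1, E2.
      destruct (refine_head lam e t2) as [t' Ht']. rewrite Ht'.
      rewrite <- app_assoc. reflexivity.
    + simpl app. simpl app in IH.
      change (refine lam (p :: q :: r' ++ e :: t2)) with (refine_piece lam p q ++ refine lam (q :: r' ++ e :: t2)).
      change (refine lam (p :: q :: r' ++ [e])) with (refine_piece lam p q ++ refine lam (q :: r' ++ [e])).
      rewrite IH. rewrite app_assoc. reflexivity.
Qed.

Lemma refine_last lam s e : exists s', refine lam (s ++ [e]) = s' ++ [e].
Proof.
  induction s as [|p r IH].
  - exists []. reflexivity.
  - destruct r as [|q r'].
    + simpl. exists (refine_piece lam p e). reflexivity.
    + destruct IH as [s' Hs']. simpl app. simpl app in Hs'.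
      change (refine lam (p :: q :: r' ++ [e])) with (refine_piece lam p q ++ refine lam (q :: r' ++ [e])).
      rewrite Hs'. exists (refine_piece lam p q ++ s'). rewrite app_assoc. reflexivity.
Qed.

Lemma iter_join lam n s1 e t2 :
  Nat.iter n (refine lam) (s1 ++ e :: t2) =
  Nat.iter n (refine lam) (s1 ++ [e]) ++ tl (Nat.iter n (refine lam) (e :: t2)).
Proof.
  revert s1 t2. induction n as [|n IH]; intros s1 t2.
  - simpl. rewrite <- app_assoc. reflexivity.
  - simpl Nat.iter. rewrite IH.
    assert (H1 : exists s', Nat.iter n (refine lam) (s1 ++ [e]) = s' ++ [e]).
    { clear IH. induction n as [|n IHn]. exists s1; reflexivity.
      destruct IHn as [s' Hs']. simpl. rewrite Hs'. apply refine_last. }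
    assert (H2 : exists t', Nat.iter n (refine lam) (e :: t2) = e :: t').
    { clear IH H1. induction n as [|n IHn]. exists t2; reflexivity.
      destruct IHn as [s' Hs']. simpl. rewrite Hs'. apply refine_head. }
    destruct H1 as [s' Hs']; destruct H2 as [t' Ht']. rewrite Hs', Ht'. simpl tl.
    rewrite <- app_assoc. simpl. apply refine_join.
Qed.

Lemma L_S lam n p q :
  L lam (S n) p q = L lam n p (ch1 p q) ++ tl (L lam n (ch1 p q) (ch2 lam p q)
     ++ tl (L lam n (ch2 lam p q) (ch3 p q) ++ tl (L lam n (ch3 p q) q))).
Proof.
  unfold L. rewrite Nat.iter_succ_r.
  change (refine lam [p; q]) with (refine_piece lam p q ++ [q]). rewrite rp_eq.
  change ([p; ch1 p q; ch2 lam p q; ch3 p q] ++ [q]) with ([p] ++ ch1 p q :: [ch2 lam p q; ch3 p q; q]).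
  rewrite iter_join. f_equal. f_equal.
  change (ch1 p q :: [ch2 lam p q; ch3 p q; q]) with ([ch1 p q] ++ ch2 lam p q :: [ch3 p q; q]).
  rewrite iter_join. f_equal. f_equal.
  change (ch2 lam p q :: [ch3 p q; q]) with ([ch2 lam p q] ++ ch3 p q :: [q]).
  rewrite iter_join. reflexivity.
Qed.

Lemma refine_shape lam p mid q : exists mid', refine lam (p :: mid ++ [q]) = p :: mid' ++ [q].
Proof.
  revert p. induction mid as [|r mid IH]; intros p.
  - assert (E : refine lam (p :: [] ++ [q]) = refine_piece lam p q ++ [q]) by reflexivity.
    rewrite E, rp_eq.
    exists [ch1 p q; ch2 lam p q; ch3 p q]. reflexivity.
  - assert (E : refine lam (p :: (r :: mid) ++ [q]) = refine_piece lam p r ++ refine lam (r :: mid ++ [q])) by reflexivity.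
    destruct (IH r) as [m' Hm']. rewrite E, Hm', rp_eq.
    exists ([ch1 p r; ch2 lam p r; ch3 p r] ++ r :: m'). reflexivity.
Qed.

Lemma L_shape lam n p q : exists mid, L lam n p q = p :: mid ++ [q].
Proof.
  induction n as [|n IH].
  - exists []. reflexivity.
  - destruct IH as [mid Hm]. unfold L in *. simpl Nat.iter. rewrite Hm. apply refine_shape.
Qed.

Lemma Forall_tl {A} (P : A -> Prop) l : Forall P l -> Forall P (tl l).
Proof. intros H; destruct H; simpl; auto. Qed.

Lemma L_bounds lam n p q : fst p <= fst q ->
  Forall (fun z => fst p <= fst z <= fst q) (L lam n p q).
Proof.
  revert p q. induction n as [|n IH]; intros p q Hpq.
  - unfold L; simpl. constructor; [lra|constructor; [lra|constructor]].
  - rewrite L_S.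
    assert (E1 : fst p <= fst (ch1 p q)) by (unfold ch1; simpl; lra).
    assert (E2 : fst (ch1 p q) <= fst (ch2 lam p q)) by (unfold ch1, ch2; simpl; lra).
    assert (E3 : fst (ch2 lam p q) <= fst (ch3 p q)) by (unfold ch3, ch2; simpl; lra).
    assert (E4 : fst (ch3 p q) <= fst q) by (unfold ch3; simpl; lra).
    repeat (apply Forall_app; split; [ | apply Forall_tl ]).
    + eapply Forall_impl; [|apply IH; lra]. simpl; intros; lra.
    + eapply Forall_impl; [|apply IH; lra]. simpl; intros; lra.
    + eapply Forall_impl; [|apply IH; lra]. simpl; intros; lra.
    + eapply Forall_impl; [|apply IH; lra]. simpl; intros; lra.
Qed.

Lemma interp_cons2 p q t x : interp (p :: q :: t) x =
  if Rle_dec x (fst q) then snd p + (snd q - snd p) / (fst q - fst p) * (x - fst p)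
  else interp (q :: t) x.
Proof. reflexivity. Qed.

Lemma join_lt A X e x :
  (exists p mid, A = p :: mid ++ [e]) -> (exists B, X = e :: B) ->
  Forall (fun z => fst z <= fst e) A -> x <= fst e ->
  interp (A ++ tl X) x = interp A x.
Proof.
  intros [p [mid HA]] [B HX] HF Hx. subst A X. simpl tl.
  revert p HF. induction mid as [|q r IH]; intros p HF.
  - change (interp (p :: e :: B) x = interp (p :: e :: []) x).
    rewrite !interp_cons2. destruct (Rle_dec x (fst e)); [reflexivity | lra].
  - change (interp (p :: q :: (r ++ [e]) ++ B) x = interp (p :: q :: r ++ [e]) x).
    rewrite !interp_cons2. destruct (Rle_dec x (fst q)). reflexivity.
    inversion HF; subst. exact (IH q H2).
Qed.

Lemma join_gt A X e x :
  (exists p mid, A = p :: mid ++ [e]) -> (exists B, X = e :: B) ->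
  Forall (fun z => fst z <= fst e) A -> fst e < x ->
  interp (A ++ tl X) x = interp X x.
Proof.
  intros [p [mid HA]] [B HX] HF Hx. subst A X. simpl tl.
  revert p HF. induction mid as [|q r IH]; intros p HF.
  - change (interp (p :: e :: B) x = interp (e :: B) x).
    rewrite !interp_cons2. destruct (Rle_dec x (fst e)); [lra | reflexivity].
  - change (interp (p :: q :: (r ++ [e]) ++ B) x = interp (e :: B) x).
    inversion HF; subst. inversion H2; subst.
    rewrite interp_cons2. destruct (Rle_dec x (fst q)). lra.
    exact (IH q H2).
Qed.

Definition aff (x0 y0 l : R) (z : node) : node := (x0 + l * fst z, y0 + l * snd z).

Lemma interp_map x0 y0 l s v : 0 < l -> Exists (fun z => v <= fst z) (tl s) ->
  interp (map (aff x0 y0 l) s) (x0 + l * v) = y0 + l * interp s v.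
Proof.
  intros Hl. induction s as [|p s IH]; intros HE.
  - simpl in HE. inversion HE.
  - destruct s as [|q t].
    + simpl in HE. inversion HE.
    + change (map (aff x0 y0 l) (p :: q :: t)) with (aff x0 y0 l p :: aff x0 y0 l q :: map (aff x0 y0 l) t).
      rewrite !interp_cons2.
      change (fst (aff x0 y0 l q)) with (x0 + l * fst q).
      change (fst (aff x0 y0 l p)) with (x0 + l * fst p).
      change (snd (aff x0 y0 l q)) with (y0 + l * snd q).
      change (snd (aff x0 y0 l p)) with (y0 + l * snd p).
      destruct (Rle_dec (x0 + l * v) (x0 + l * fst q)) as [H1|H1];
      destruct (Rle_dec v (fst q)) as [H2|H2].
      * destruct (Req_dec (fst q - fst p) 0) as [Hd|Hd].
        -- replace (x0 + l * fst q - (x0 + l * fst p)) with 0 by (replace (fst q) with (fst p) by lra; ring).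
           rewrite Hd. unfold Rdiv. rewrite Rinv_0. ring.
        -- field. split; auto. intro Hc. apply Hd. apply Rmult_eq_reg_l with l; lra.
      * exfalso. apply H2. apply Rmult_le_reg_l with l; lra.
      * exfalso. apply H1. apply Rplus_le_compat_l. apply Rmult_le_compat_l; lra.
      * apply IH. simpl in HE. inversion HE; subst. lra. simpl. exact H0.
Qed.

Lemma map_tl {A B} (f : A -> B) l : map f (tl l) = tl (map f l).
Proof. destruct l; reflexivity. Qed.

Lemma L_map lam n p q x0 y0 l : 0 < l -> fst p < fst q ->
  L lam n (aff x0 y0 l p) (aff x0 y0 l q) = map (aff x0 y0 l) (L lam n p q).
Proof.
  intros Hl. revert p q. induction n as [|n IH]; intros p q Hpq.
  - reflexivity.
  - rewrite !L_S.
    destruct p as [a ya]; destruct q as [b yb]; simpl in Hpq.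
    assert (Hm : (y0 + l * yb - (y0 + l * ya)) / (x0 + l * b - (x0 + l * a)) = (yb - ya) / (b - a))
      by (replace (x0 + l * b - (x0 + l * a)) with (l * (b - a)) by ring; field; split; lra).
    assert (E1 : ch1 (aff x0 y0 l (a, ya)) (aff x0 y0 l (b, yb)) = aff x0 y0 l (ch1 (a, ya) (b, yb))).
    { unfold ch1, aff; simpl. rewrite Hm. f_equal; field; try lra. }
    assert (E2 : ch2 lam (aff x0 y0 l (a, ya)) (aff x0 y0 l (b, yb)) = aff x0 y0 l (ch2 lam (a, ya) (b, yb))).
    { unfold ch2, aff; simpl. rewrite Hm. f_equal; field; try lra. }
    assert (E3 : ch3 (aff x0 y0 l (a, ya)) (aff x0 y0 l (b, yb)) = aff x0 y0 l (ch3 (a, ya) (b, yb))).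
    { unfold ch3, aff; simpl. rewrite Hm. f_equal; field; try lra. }
    rewrite E1, E2, E3.
    unfold ch1, ch2, ch3; simpl.
    rewrite !IH by (simpl; lra).
    rewrite !map_app, !map_tl, !map_app, !map_tl, !map_app, !map_tl. reflexivity.
Qed.

Definition G lam n m t := interp (L lam n (0, 0) (1, m)) t.

Lemma L_aff lam n x0 y0 l m p q : 0 < l -> p = (x0, y0) -> q = (x0 + l, y0 + l * m) ->
  L lam n p q = map (aff x0 y0 l) (L lam n (0, 0) (1, m)).
Proof.
  intros Hl Hp Hq. rewrite <- L_map by (simpl; lra).
  f_equal; unfold aff; simpl; rewrite ?Hp, ?Hq; f_equal; ring.
Qed.

Lemma interp_aff_G lam n m x0 y0 l v : 0 < l -> v <= 1 ->
  interp (map (aff x0 y0 l) (L lam n (0, 0) (1, m))) (x0 + l * v) = y0 + l * G lam n m v.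
Proof.
  intros Hl Hv. apply interp_map; auto.
  destruct (L_shape lam n (0,0) (1,m)) as [mid Hm]. rewrite Hm. simpl tl.
  apply Exists_app. right. apply Exists_cons_hd. simpl; lra.
Qed.

Definition sq (m : R) := sqrt (1 + m ^ 2).
Definition mu1 lam m := m + 6 * lam * sq m.
Definition mu2 lam m := m - 6 * lam * sq m.

Lemma ch1_O m : ch1 (0, 0) (1, m) = (1/3, m/3).
Proof. unfold ch1; simpl; f_equal; field. Qed.
Lemma ch2_O lam m : ch2 lam (0, 0) (1, m) = (1/2, m/2 + lam * sq m).
Proof. unfold ch2, sq; simpl. replace ((m - 0) / (1 - 0)) with m by field. f_equal; field. Qed.
Lemma ch3_O m : ch3 (0, 0) (1, m) = (2/3, 2 * m / 3).
Proof. unfold ch3; simpl; f_equal; field. Qed.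

Lemma G_S lam n m t : G lam (S n) m t =
  interp (L lam n (0,0) (1/3, m/3) ++ tl (L lam n (1/3, m/3) (1/2, m/2 + lam * sq m)
    ++ tl (L lam n (1/2, m/2 + lam * sq m) (2/3, 2 * m / 3) ++ tl (L lam n (2/3, 2 * m / 3) (1, m))))) t.
Proof. unfold G. rewrite L_S, ch1_O, ch2_O, ch3_O. reflexivity. Qed.

Lemma join_L_lt lam n p e X x : fst p <= fst e -> (exists B, X = e :: B) -> x <= fst e ->
  interp (L lam n p e ++ tl X) x = interp (L lam n p e) x.
Proof.
  intros H1 H2 H3. apply join_lt with e; auto.
  - destruct (L_shape lam n p e) as [mid Hm]. eauto.
  - eapply Forall_impl; [|apply L_bounds; exact H1]. simpl; intros; lra.
Qed.

Lemma join_L_gt lam n p e X x : fst p <= fst e -> (exists B, X = e :: B) -> fst e < x ->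
  interp (L lam n p e ++ tl X) x = interp X x.
Proof.
  intros H1 H2 H3. apply join_gt with e; auto.
  - destruct (L_shape lam n p e) as [mid Hm]. eauto.
  - eapply Forall_impl; [|apply L_bounds; exact H1]. simpl; intros; lra.
Qed.

Lemma L_head lam n p q Y : exists B, L lam n p q ++ Y = p :: B.
Proof. destruct (L_shape lam n p q) as [mid Hm]. rewrite Hm. eexists. reflexivity. Qed.
Lemma L_head' lam n p q : exists B, L lam n p q = p :: B.
Proof. destruct (L_shape lam n p q) as [mid Hm]. rewrite Hm. eexists. reflexivity. Qed.

Lemma G_0 lam m t : t <= 1 -> G lam 0 m t = m * t.
Proof.
  intros H. unfold G, L. simpl Nat.iter. rewrite interp_cons2. simpl fst; simpl snd.
  destruct (Rle_dec t 1); [field | lra].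
Qed.

Lemma P0 lam n m v : 0 <= v <= 1 -> G lam (S n) m (v / 3) = G lam n m v / 3.
Proof.
  intros Hv. rewrite G_S. rewrite join_L_lt; [| simpl; lra | apply L_head | simpl; lra].
  rewrite (L_aff lam n 0 0 (1/3) m) by (try f_equal; lra).
  replace (v / 3) with (0 + 1/3 * v) by field. rewrite interp_aff_G by lra. field.
Qed.

Lemma P1s lam n m v : 0 < v <= 1 -> G lam (S n) m (1/3 + v / 6) = m / 3 + G lam n (mu1 lam m) v / 6.
Proof.
  intros Hv. rewrite G_S. rewrite join_L_gt; [| simpl; lra | apply L_head | simpl; lra].
  rewrite join_L_lt; [| simpl; lra | apply L_head | simpl; lra].
  rewrite (L_aff lam n (1/3) (m/3) (1/6) (mu1 lam m)) by (try f_equal; unfold mu1; lra).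
  replace (1/3 + v / 6) with (1/3 + 1/6 * v) by field. rewrite interp_aff_G by lra. field.
Qed.

Lemma P2s lam n m v : 0 < v <= 1 -> G lam (S n) m (1/2 + v / 6) = m / 2 + lam * sq m + G lam n (mu2 lam m) v / 6.
Proof.
  intros Hv. rewrite G_S. rewrite join_L_gt; [| simpl; lra | apply L_head | simpl; lra].
  rewrite join_L_gt; [| simpl; lra | apply L_head | simpl; lra].
  rewrite join_L_lt; [| simpl; lra | apply L_head' | simpl; lra].
  rewrite (L_aff lam n (1/2) (m/2 + lam * sq m) (1/6) (mu2 lam m)) by (try f_equal; unfold mu2; lra).
  replace (1/2 + v / 6) with (1/2 + 1/6 * v) by field. rewrite interp_aff_G by lra. field.
Qed.

Lemma P3s lam n m v : 0 < v <= 1 -> G lam (S n) m (2/3 + v / 3) = 2 * m / 3 + G lam n m v / 3.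
Proof.
  intros Hv. rewrite G_S. rewrite join_L_gt; [| simpl; lra | apply L_head | simpl; lra].
  rewrite join_L_gt; [| simpl; lra | apply L_head | simpl; lra].
  rewrite join_L_gt; [| simpl; lra | apply L_head' | simpl; lra].
  rewrite (L_aff lam n (2/3) (2 * m/3) (1/3) m) by (try f_equal; lra).
  replace (2/3 + v / 3) with (2/3 + 1/3 * v) by field. rewrite interp_aff_G by lra. field.
Qed.

Lemma G_at0 lam n m : G lam n m 0 = 0.
Proof.
  revert m; induction n as [|n IH]; intros m.
  - rewrite G_0 by lra. ring.
  - replace (G lam (S n) m 0) with (G lam (S n) m (0/3)) by (f_equal; field).
    rewrite P0 by lra. rewrite IH. field.
Qed.

Lemma G_at1 lam n m : G lam n m 1 = m.
Proof.
  revert m; induction n as [|n IH]; intros m.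
  - rewrite G_0 by lra. ring.
  - replace (G lam (S n) m 1) with (G lam (S n) m (2/3 + 1/3)) by (f_equal; field).
    rewrite P3s by lra. rewrite IH. field.
Qed.

Lemma P1 lam n m v : 0 <= v <= 1 -> G lam (S n) m (1/3 + v / 6) = m / 3 + G lam n (mu1 lam m) v / 6.
Proof.
  intros Hv. destruct (Req_dec v 0) as [->|Hv0].
  - replace (1/3 + 0/6) with (1/3) by field.
    rewrite (P0 lam n m 1) by lra. rewrite G_at1, G_at0. field.
  - apply P1s; lra.
Qed.

Lemma P2 lam n m v : 0 <= v <= 1 -> G lam (S n) m (1/2 + v / 6) = m / 2 + lam * sq m + G lam n (mu2 lam m) v / 6.
Proof.
  intros Hv. destruct (Req_dec v 0) as [->|Hv0].
  - replace (1/2 + 0/6) with (1/3 + 1/6) by field. rewrite P1 by lra.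
    rewrite G_at1, G_at0. unfold mu1. field.
  - apply P2s; lra.
Qed.

Lemma P3 lam n m v : 0 <= v <= 1 -> G lam (S n) m (2/3 + v / 3) = 2 * m / 3 + G lam n m v / 3.
Proof.
  intros Hv. destruct (Req_dec v 0) as [->|Hv0].
  - replace (2/3 + 0/3) with (1/2 + 1/6) by field. rewrite P2 by lra.
    rewrite G_at1, G_at0. unfold mu2. field.
  - apply P3s; lra.
Qed.

Lemma abs_el x a : Rabs x <= a -> -a <= x <= a.
Proof. unfold Rabs; destruct (Rcase_abs x); lra. Qed.
Lemma abs_in x a : -a <= x <= a -> Rabs x <= a.
Proof. unfold Rabs; destruct (Rcase_abs x); lra. Qed.
Lemma abs_ge0 x : 0 <= Rabs x.
Proof. apply Rabs_pos. Qed.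
Lemma abs_facts x : -Rabs x <= x <= Rabs x.
Proof. unfold Rabs; destruct (Rcase_abs x); lra. Qed.

Lemma sq_ge1 m : 1 <= sq m.
Proof. unfold sq. apply Rle_trans with (sqrt 1); [rewrite sqrt_1; lra | apply sqrt_le_1_alt; pose proof (pow2_ge_0 m); lra]. Qed.
Lemma sq_le m : sq m <= 1 + Rabs m.
Proof.
  unfold sq. rewrite <- (sqrt_Rsqr (1 + Rabs m)) by (pose proof (Rabs_pos m); lra).
  apply sqrt_le_1_alt. unfold Rsqr. pose proof (Rabs_pos m).
  replace (m ^ 2) with (Rabs m * Rabs m). nra.
  rewrite <- Rabs_mult. simpl. rewrite Rmult_1_r. apply Rabs_right. nra.
Qed.
Lemma sq_opp m : sq (- m) = sq m.
Proof. unfold sq. f_equal. ring. Qed.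

Lemma pieces t : 0 <= t <= 1 ->
  (exists v, 0 <= v <= 1 /\ t = v / 3) \/ (exists v, 0 <= v <= 1 /\ t = 1/3 + v / 6) \/
  (exists v, 0 <= v <= 1 /\ t = 1/2 + v / 6) \/ (exists v, 0 <= v <= 1 /\ t = 2/3 + v / 3).
Proof.
  intros Ht.
  destruct (Rle_dec t (1/3)). left; exists (3 * t); split; [lra|field].
  destruct (Rle_dec t (1/2)). right; left; exists (6 * t - 2); split; [lra|field].
  destruct (Rle_dec t (2/3)). right; right; left; exists (6 * t - 3); split; [lra|field].
  right; right; right; exists (3 * t - 2); split; [lra|field].
Qed.

Section S.
Variable lam : R.
Hypothesis Hlam : 1/6 < lam < 5/6.

Lemma mu1_b m : 1 + Rabs (mu1 lam m) <= (1 + 6 * lam) * (1 + Rabs m).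
Proof.
  unfold mu1. pose proof (sq_le m). pose proof (sq_ge1 m).
  pose proof (Rabs_triang m (6 * lam * sq m)).
  rewrite (Rabs_right (6 * lam * sq m)) in H1 by nra. nra.
Qed.
Lemma mu2_b m : 1 + Rabs (mu2 lam m) <= (1 + 6 * lam) * (1 + Rabs m).
Proof.
  unfold mu2. pose proof (sq_le m). pose proof (sq_ge1 m).
  pose proof (Rabs_triang m (- (6 * lam * sq m))).
  rewrite Rabs_Ropp in H1.
  rewrite (Rabs_right (6 * lam * sq m)) in H1 by nra. unfold Rminus. nra.
Qed.

Definition Bc := 6 * lam / (5 - 6 * lam).
Lemma Bc_pos : 0 <= Bc.
Proof. unfold Bc. apply Rmult_le_pos. lra. left; apply Rinv_0_lt_compat; lra. Qed.
Lemma Bc_eq X : Bc * ((1 + 6 * lam) * X) / 6 + lam * X = Bc * X.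
Proof. unfold Bc. field. lra. Qed.

Lemma dev n m t : 0 <= t <= 1 -> Rabs (G lam n m t - m * t) <= Bc * (1 + Rabs m).
Proof.
  revert m t. induction n as [|n IH]; intros m t Ht.
  - rewrite G_0 by lra. rewrite Rminus_diag, Rabs_R0. pose proof Bc_pos. pose proof (Rabs_pos m). nra.
  - pose proof Bc_pos as HB. pose proof (Rabs_pos m) as Hm.
    destruct (pieces t Ht) as [[v [Hv ->]]|[[v [Hv ->]]|[[v [Hv ->]]|[v [Hv ->]]]]].
    + rewrite P0 by lra. specialize (IH m v Hv). apply abs_el in IH. apply abs_in. nra.
    + rewrite P1 by lra. specialize (IH (mu1 lam m) v Hv). apply abs_el in IH. apply abs_in.
      pose proof (mu1_b m). pose proof (sq_le m). pose proof (sq_ge1 m).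
      assert (Bc * (1 + Rabs (mu1 lam m)) <= Bc * ((1 + 6 * lam) * (1 + Rabs m))) by (apply Rmult_le_compat_l; lra).
      pose proof (Bc_eq (1 + Rabs m)).
      assert (0 <= lam * sq m * v <= lam * (1 + Rabs m)).
      { split. apply Rmult_le_pos; [apply Rmult_le_pos; lra | lra].
        apply Rle_trans with (lam * sq m).
        rewrite <- (Rmult_1_r (lam * sq m)) at 2; apply Rmult_le_compat_l; [apply Rmult_le_pos|]; lra.
        apply Rmult_le_compat_l; lra. }
      unfold mu1 in *. nra.
    + rewrite P2 by lra. specialize (IH (mu2 lam m) v Hv). apply abs_el in IH. apply abs_in.
      pose proof (mu2_b m). pose proof (sq_le m). pose proof (sq_ge1 m).
      assert (Bc * (1 + Rabs (mu2 lam m)) <= Bc * ((1 + 6 * lam) * (1 + Rabs m))) by (apply Rmult_le_compat_l; lra).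
      pose proof (Bc_eq (1 + Rabs m)).
      assert (0 <= lam * sq m * (1 - v) <= lam * (1 + Rabs m)).
      { split. apply Rmult_le_pos; [apply Rmult_le_pos; lra | lra].
        apply Rle_trans with (lam * sq m).
        rewrite <- (Rmult_1_r (lam * sq m)) at 2; apply Rmult_le_compat_l; [apply Rmult_le_pos|]; lra.
        apply Rmult_le_compat_l; lra. }
      unfold mu2 in *. nra.
    + rewrite P3 by lra. specialize (IH m v Hv). apply abs_el in IH. apply abs_in. nra.
Qed.


Definition M m := (1 + Bc) * (1 + Rabs m).
Lemma M_facts m : Rabs m <= M m /\ 1 + Rabs m <= M m /\ 0 <= M m.
Proof. unfold M. pose proof Bc_pos. pose proof (Rabs_pos m). nra. Qed.

Lemma Gbound n m t : 0 <= t <= 1 -> Rabs (G lam n m t) <= M m.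
Proof.
  intros Ht. pose proof (dev n m t Ht) as H. apply abs_el in H. apply abs_in.
  pose proof (abs_facts m). pose proof Bc_pos. pose proof (Rabs_pos m). unfold M.
  assert (Rabs m * t <= Rabs m) by nra. assert (-(Rabs m) <= m * t) by nra. assert (m * t <= Rabs m) by nra.
  nra.
Qed.

Lemma endL n m t : 0 <= t <= 1 -> Rabs (G lam n m t) <= 6 * M m * t.
Proof.
  revert m t. induction n as [|n IH]; intros m t Ht.
  - rewrite G_0 by lra. destruct (M_facts m) as [H1 [H2 H3]]. rewrite Rabs_mult, (Rabs_right t) by lra. nra.
  - destruct (Rle_dec t (1/3)).
    + replace t with ((3 * t) / 3) by field. rewrite P0 by lra. specialize (IH m (3 * t) ltac:(lra)).
      unfold Rdiv. rewrite Rabs_mult, (Rabs_right (/3)) by lra. lra.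
    + pose proof (Gbound (S n) m t Ht). destruct (M_facts m) as [H1 [H2 H3]]. nra.
Qed.

Lemma endR n m t : 0 <= t <= 1 -> Rabs (G lam n m t - m) <= 6 * M m * (1 - t).
Proof.
  revert m t. induction n as [|n IH]; intros m t Ht.
  - rewrite G_0 by lra. destruct (M_facts m) as [H1 [H2 H3]].
    replace (m * t - m) with (m * (t - 1)) by ring.
    rewrite Rabs_mult, (Rabs_left1 (t - 1)) by lra. nra.
  - destruct (Rle_dec (2/3) t).
    + replace t with (2/3 + (3 * t - 2) / 3) by field. rewrite P3 by lra. specialize (IH m (3 * t - 2) ltac:(lra)).
      replace (2 * m / 3 + G lam n m (3 * t - 2) / 3 - m) with ((G lam n m (3 * t - 2) - m) / 3) by field.
      unfold Rdiv. rewrite Rabs_mult, (Rabs_right (/3)) by lra. lra.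
    + pose proof (Gbound (S n) m t Ht). destruct (M_facts m) as [H1 [H2 H3]].
      pose proof (Rabs_triang (G lam (S n) m t) (- m)). rewrite Rabs_Ropp in H0. unfold Rminus. nra.
Qed.

Definition W m := 24 * (M m + M (mu1 lam m) + M (mu2 lam m)).
Lemma W_facts m : 24 * M m <= W m /\ 24 * M (mu1 lam m) <= W m /\ 24 * M (mu2 lam m) <= W m /\ 24 * Rabs m <= W m.
Proof.
  unfold W. destruct (M_facts m) as [H1 [H2 H3]]. destruct (M_facts (mu1 lam m)) as [H4 [H5 H6]].
  destruct (M_facts (mu2 lam m)) as [H7 [H8 H9]]. lra.
Qed.

Lemma val13 n m : G lam (S n) m (1/3) = m / 3.
Proof. rewrite (P0 lam n m 1) by lra. rewrite G_at1. reflexivity. Qed.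
Lemma val12 n m : G lam (S n) m (1/2) = m / 2 + lam * sq m.
Proof. replace (1/2) with (1/2 + 0/6) at 1 by field. rewrite P2 by lra. rewrite G_at0. field. Qed.
Lemma val23 n m : G lam (S n) m (2/3) = 2 * m / 3.
Proof. replace (2/3) with (2/3 + 0/3) at 1 by field. rewrite P3 by lra. rewrite G_at0. field. Qed.

Lemma absd1 a b : a <= b -> Rabs (a - b) = b - a.
Proof. intros; rewrite Rabs_left1 by lra; ring. Qed.
Lemma absd2 a b : b <= a -> Rabs (a - b) = a - b.
Proof. intros; rewrite Rabs_right by lra; ring. Qed.

Lemma mull_le x a b : 0 <= x -> a <= b -> x * a <= x * b.
Proof. intros; apply Rmult_le_compat_l; auto. Qed.

Lemma mulr_le a b x : a <= b -> 0 <= x -> a * x <= b * x.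
Proof. intros; apply Rmult_le_compat_r; auto. Qed.

Lemma BL13 n m t : 0 <= t <= 1 -> Rabs (G lam (S n) m t - G lam (S n) m (1/3)) <= W m * Rabs (t - 1/3).
Proof.
  intros Ht. rewrite val13. destruct (W_facts m) as [W1 [W2 [W3 W4]]].
  destruct (M_facts m) as [H1 [H2 H3]].
  destruct (Rle_dec t (1/3)).
  - rewrite (absd1 t (1/3)) by lra. replace (G lam (S n) m t) with (G lam (S n) m (3 * t / 3)) by (f_equal; field).
    rewrite P0 by lra.
    pose proof (endR n m (3 * t) ltac:(lra)) as E. apply abs_el in E. apply abs_in.
    pose proof (mulr_le _ _ (1/3 - t) W1 ltac:(lra)). lra.
  - rewrite (absd2 t (1/3)) by lra. destruct (Rle_dec t (1/2)).
    + replace (G lam (S n) m t) with (G lam (S n) m (1/3 + (6 * t - 2) / 6)) by (f_equal; field).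
      rewrite P1 by lra.
      pose proof (endL n (mu1 lam m) (6 * t - 2) ltac:(lra)) as E. apply abs_el in E. apply abs_in.
      pose proof (mulr_le _ _ (t - 1/3) W2 ltac:(lra)). lra.
    + pose proof (Gbound (S n) m t Ht) as E. apply abs_el in E. apply abs_in.
      pose proof (abs_facts m). pose proof (mull_le (W m) (1/6) (t - 1/3) ltac:(lra) ltac:(lra)). lra.
Qed.

Lemma BL12 n m t : 0 <= t <= 1 -> Rabs (G lam (S n) m t - G lam (S n) m (1/2)) <= W m * Rabs (t - 1/2).
Proof.
  intros Ht. rewrite val12. destruct (W_facts m) as [W1 [W2 [W3 W4]]].
  destruct (M_facts m) as [H1 [H2 H3]]. pose proof (sq_le m). pose proof (sq_ge1 m).
  assert (Hls : 0 <= lam * sq m <= 1 + Rabs m).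
  { split. apply Rmult_le_pos; lra. apply Rle_trans with (1 * sq m). apply Rmult_le_compat_r; lra. lra. }
  destruct (Rle_dec t (1/2)).
  - rewrite (absd1 t (1/2)) by lra. destruct (Rle_dec (1/3) t).
    + replace (G lam (S n) m t) with (G lam (S n) m (1/3 + (6 * t - 2) / 6)) by (f_equal; field).
      rewrite P1 by lra.
      pose proof (endR n (mu1 lam m) (6 * t - 2) ltac:(lra)) as E. apply abs_el in E. apply abs_in.
      pose proof (mulr_le _ _ (1/2 - t) W2 ltac:(lra)). unfold mu1 in *. lra.
    + pose proof (Gbound (S n) m t Ht) as E. apply abs_el in E. apply abs_in.
      pose proof (abs_facts m). pose proof (mull_le (W m) (1/6) (1/2 - t) ltac:(lra) ltac:(lra)). lra.
  - rewrite (absd2 t (1/2)) by lra. destruct (Rle_dec t (2/3)).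
    + replace (G lam (S n) m t) with (G lam (S n) m (1/2 + (6 * t - 3) / 6)) by (f_equal; field).
      rewrite P2 by lra.
      pose proof (endL n (mu2 lam m) (6 * t - 3) ltac:(lra)) as E. apply abs_el in E. apply abs_in.
      pose proof (mulr_le _ _ (t - 1/2) W3 ltac:(lra)). lra.
    + pose proof (Gbound (S n) m t Ht) as E. apply abs_el in E. apply abs_in.
      pose proof (abs_facts m). pose proof (mull_le (W m) (1/6) (t - 1/2) ltac:(lra) ltac:(lra)). lra.
Qed.

Lemma BL23 n m t : 0 <= t <= 1 -> Rabs (G lam (S n) m t - G lam (S n) m (2/3)) <= W m * Rabs (t - 2/3).
Proof.
  intros Ht. rewrite val23. destruct (W_facts m) as [W1 [W2 [W3 W4]]].
  destruct (M_facts m) as [H1 [H2 H3]]. pose proof (sq_le m). pose proof (sq_ge1 m).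
  destruct (Rle_dec t (2/3)).
  - rewrite (absd1 t (2/3)) by lra. destruct (Rle_dec (1/2) t).
    + replace (G lam (S n) m t) with (G lam (S n) m (1/2 + (6 * t - 3) / 6)) by (f_equal; field).
      rewrite P2 by lra.
      pose proof (endR n (mu2 lam m) (6 * t - 3) ltac:(lra)) as E. apply abs_el in E. apply abs_in.
      pose proof (mulr_le _ _ (2/3 - t) W3 ltac:(lra)). unfold mu2 in *. lra.
    + pose proof (Gbound (S n) m t Ht) as E. apply abs_el in E. apply abs_in.
      pose proof (abs_facts m). pose proof (mull_le (W m) (1/6) (2/3 - t) ltac:(lra) ltac:(lra)). lra.
  - rewrite (absd2 t (2/3)) by lra.
    replace (G lam (S n) m t) with (G lam (S n) m (2/3 + (3 * t - 2) / 3)) by (f_equal; field).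
    rewrite P3 by lra.
    pose proof (endL n m (3 * t - 2) ltac:(lra)) as E. apply abs_el in E. apply abs_in.
    pose proof (mulr_le _ _ (t - 2/3) W1 ltac:(lra)). lra.
Qed.

Lemma BL0 n m t : 0 <= t <= 1 -> Rabs (G lam n m t - G lam n m 0) <= W m * Rabs (t - 0).
Proof.
  intros Ht. rewrite G_at0, Rminus_0_r, Rminus_0_r, (Rabs_right t) by lra.
  pose proof (endL n m t Ht). destruct (W_facts m) as [W1 _]. destruct (M_facts m) as [_ [_ H3]]. nra.
Qed.

Lemma BL1 n m t : 0 <= t <= 1 -> Rabs (G lam n m t - G lam n m 1) <= W m * Rabs (t - 1).
Proof.
  intros Ht. rewrite G_at1, (absd1 t 1) by lra.
  pose proof (endR n m t Ht). destruct (W_facts m) as [W1 _]. destruct (M_facts m) as [_ [_ H3]]. nra.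
Qed.

Lemma mu1_opp m : mu1 lam (- m) = - mu2 lam m.
Proof. unfold mu1, mu2. rewrite sq_opp. ring. Qed.
Lemma mu2_opp m : mu2 lam (- m) = - mu1 lam m.
Proof. unfold mu1, mu2. rewrite sq_opp. ring. Qed.

Lemma refl n m u : 0 <= u <= 1 -> G lam n m (1 - u) = m + G lam n (- m) u.
Proof.
  revert m u. induction n as [|n IH]; intros m u Hu.
  - rewrite !G_0 by lra. ring.
  - destruct (pieces u Hu) as [[v [Hv ->]]|[[v [Hv ->]]|[[v [Hv ->]]|[v [Hv ->]]]]].
    + replace (1 - v / 3) with (2/3 + (1 - v) / 3) by field. rewrite P3, P0 by lra.
      rewrite IH by lra. field.
    + replace (1 - (1/3 + v / 6)) with (1/2 + (1 - v) / 6) by field. rewrite P2, P1 by lra.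
      rewrite IH by lra. rewrite mu1_opp, ?sq_opp. unfold mu2. field.
    + replace (1 - (1/2 + v / 6)) with (1/3 + (1 - v) / 6) by field. rewrite P2, P1 by lra.
      rewrite IH by lra. rewrite mu2_opp, ?sq_opp. unfold mu1. field.
    + replace (1 - (2/3 + v / 3)) with ((1 - v) / 3) by field. rewrite P3, P0 by lra.
      rewrite IH by lra. field.
Qed.

End S.

Lemma glue (f : R -> R) p q x K1 W0 : 0 <= p <= x -> x <= q <= 1 -> 0 <= K1 -> 0 <= W0 ->
  (forall t, p <= t <= q -> Rabs (f t - f x) <= K1 * Rabs (t - x)) ->
  (forall t, 0 <= t <= 1 -> Rabs (f t - f p) <= W0 * Rabs (t - p)) ->
  (forall t, 0 <= t <= 1 -> Rabs (f t - f q) <= W0 * Rabs (t - q)) ->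
  forall t, 0 <= t <= 1 -> Rabs (f t - f x) <= Rmax K1 W0 * Rabs (t - x).
Proof.
  intros H1 H2 HK HW Hin Hp Hq t Ht.
  pose proof (Rmax_l K1 W0). pose proof (Rmax_r K1 W0).
  destruct (Rlt_dec t p).
  - specialize (Hp t Ht). specialize (Hin p ltac:(lra)).
    rewrite (absd1 t p) in Hp by lra. rewrite (absd1 p x) in Hin by lra. rewrite (absd1 t x) by lra.
    apply abs_el in Hp. apply abs_el in Hin. apply abs_in.
    pose proof (mulr_le _ _ (p - t) H0 ltac:(lra)). pose proof (mulr_le _ _ (x - p) H ltac:(lra)). lra.
  - destruct (Rle_dec t q).
    + apply Rle_trans with (K1 * Rabs (t - x)). apply Hin; lra. apply mulr_le; auto. apply Rabs_pos.
    + specialize (Hq t Ht). specialize (Hin q ltac:(lra)).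
      rewrite (absd2 t q) in Hq by lra. rewrite (absd2 q x) in Hin by lra. rewrite (absd2 t x) by lra.
      apply abs_el in Hq. apply abs_el in Hin. apply abs_in.
      pose proof (mulr_le _ _ (t - q) H0 ltac:(lra)). pose proof (mulr_le _ _ (q - x) H ltac:(lra)). lra.
Qed.

Definition Cset (y : R) := 0 <= y <= 1 /\ forall k, Umap (Nat.iter k Tmap y) = 0%nat \/ Umap (Nat.iter k Tmap y) = 3%nat.

Lemma Umap0 y : Umap y = 0%nat -> y < 1/3.
Proof. unfold Umap. destruct (Rlt_dec y (1/3)); auto. destruct (Rlt_dec y (1/2)); try discriminate.
  destruct (Rlt_dec y (2/3)); discriminate. Qed.
Lemma Umap3 y : Umap y = 3%nat -> 2/3 <= y.
Proof. unfold Umap. destruct (Rlt_dec y (1/3)); try discriminate. destruct (Rlt_dec y (1/2)); try discriminate.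
  destruct (Rlt_dec y (2/3)); try discriminate. lra. Qed.
Lemma Umap_vals y : Umap y = 0%nat \/ Umap y = 1%nat \/ Umap y = 2%nat \/ Umap y = 3%nat.
Proof. unfold Umap. destruct (Rlt_dec y (1/3)); auto. destruct (Rlt_dec y (1/2)); auto.
  destruct (Rlt_dec y (2/3)); auto. Qed.

Lemma T0 y : y < 1/3 -> Tmap y = 3 * y.
Proof. intros; unfold Tmap; destruct (Rlt_dec y (1/3)); lra. Qed.
Lemma T1 y : 1/3 <= y < 1/2 -> Tmap y = 6 * y - 2.
Proof. intros; unfold Tmap; destruct (Rlt_dec y (1/3)); try lra; destruct (Rlt_dec y (1/2)); lra. Qed.
Lemma T2 y : 1/2 <= y < 2/3 -> Tmap y = 4 - 6 * y.
Proof. intros; unfold Tmap; destruct (Rlt_dec y (1/3)); try lra; destruct (Rlt_dec y (1/2)); try lra;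
  destruct (Rlt_dec y (2/3)); lra. Qed.
Lemma T3 y : 2/3 <= y -> Tmap y = 3 * y - 2.
Proof. intros; unfold Tmap; destruct (Rlt_dec y (1/3)); try lra; destruct (Rlt_dec y (1/2)); try lra;
  destruct (Rlt_dec y (2/3)); lra. Qed.
Lemma T01 y : 0 <= y <= 1 -> 0 <= Tmap y <= 1.
Proof. intros; unfold Tmap; destruct (Rlt_dec y (1/3)); try lra; destruct (Rlt_dec y (1/2)); try lra;
  destruct (Rlt_dec y (2/3)); lra. Qed.

Lemma Cset_step y : Cset y -> (y < 1/3 /\ Cset (3 * y)) \/ (2/3 <= y /\ Cset (3 * y - 2)).
Proof.
  intros [Hy Hk].
  assert (Hs : forall k, Umap (Nat.iter k Tmap (Tmap y)) = 0%nat \/ Umap (Nat.iter k Tmap (Tmap y)) = 3%nat).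
  { intros k. rewrite <- Nat.iter_succ_r. apply Hk. }
  destruct (Hk 0%nat) as [H|H]; simpl in H.
  - apply Umap0 in H. left. split; auto. rewrite <- T0 by auto. split; auto. apply T01; auto.
  - apply Umap3 in H. right. split; auto. rewrite <- T3 by auto. split; auto. apply T01; auto.
Qed.

Section S.
Variable lam : R.
Hypothesis Hlam : 1/6 < lam < 5/6.

Lemma W_pos m : 0 <= W lam m.
Proof. destruct (W_facts lam Hlam m) as [W1 _]. destruct (M_facts lam Hlam m) as [_ [_ H]]. lra. Qed.

Lemma base_lip m t x : 0 <= t <= 1 -> 0 <= x <= 1 -> Rabs (G lam 0 m t - G lam 0 m x) <= W lam m * Rabs (t - x).
Proof.
  intros Ht Hx. rewrite !G_0 by lra. replace (m * t - m * x) with (m * (t - x)) by ring.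
  rewrite Rabs_mult. apply mulr_le. destruct (W_facts lam Hlam m) as [_ [_ [_ H]]]. pose proof (Rabs_pos m). lra.
  apply Rabs_pos.
Qed.

Lemma cantor n : forall y m t, Cset y -> 0 <= t <= 1 ->
  Rabs (G lam n m t - G lam n m y) <= W lam m * Rabs (t - y).
Proof.
  induction n as [|n IH]; intros y m t Hy Ht.
  - apply base_lip; auto. apply Hy.
  - rewrite <- (Rmax_left (W lam m) (W lam m)) by lra.
    destruct (Cset_step y Hy) as [[Hy1 Hc]|[Hy1 Hc]]; destruct Hy as [Hy0 _].
    + apply (glue (G lam (S n) m) 0 (1/3)); try lra; try apply W_pos.
      * intros s Hs. replace (G lam (S n) m s) with (G lam (S n) m (3 * s / 3)) by (f_equal; field).
        replace (G lam (S n) m y) with (G lam (S n) m (3 * y / 3)) by (f_equal; field).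
        rewrite !P0 by lra. specialize (IH (3 * y) m (3 * s) Hc ltac:(lra)).
        replace (G lam n m (3 * s) / 3 - G lam n m (3 * y) / 3) with ((G lam n m (3 * s) - G lam n m (3 * y)) / 3) by field.
        replace (3 * s - 3 * y) with (3 * (s - y)) in IH by ring.
        unfold Rdiv. rewrite Rabs_mult, (Rabs_right (/3)) by lra. rewrite Rabs_mult, (Rabs_right 3) in IH by lra. nra.
      * intros s Hs. apply BL0; auto.
      * intros s Hs. apply BL13; auto.
    + apply (glue (G lam (S n) m) (2/3) 1); try lra; try apply W_pos.
      * intros s Hs. replace (G lam (S n) m s) with (G lam (S n) m (2/3 + (3 * s - 2) / 3)) by (f_equal; field).
        replace (G lam (S n) m y) with (G lam (S n) m (2/3 + (3 * y - 2) / 3)) by (f_equal; field).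
        rewrite !P3 by lra. specialize (IH (3 * y - 2) m (3 * s - 2) Hc ltac:(lra)).
        replace (2 * m / 3 + G lam n m (3 * s - 2) / 3 - (2 * m / 3 + G lam n m (3 * y - 2) / 3)) with ((G lam n m (3 * s - 2) - G lam n m (3 * y - 2)) / 3) by field.
        replace (3 * s - 2 - (3 * y - 2)) with (3 * (s - y)) in IH by ring.
        unfold Rdiv. rewrite Rabs_mult, (Rabs_right (/3)) by lra. rewrite Rabs_mult, (Rabs_right 3) in IH by lra. nra.
      * intros s Hs. apply BL23; auto.
      * intros s Hs. apply BL1; auto.
Qed.

Definition LipAt m x := exists K, 0 <= K /\ forall n t, 0 <= t <= 1 -> Rabs (G lam n m t - G lam n m x) <= K * Rabs (t - x).


Lemma sc A B K c D u w : 0 < c -> 0 <= K -> D = c * (u - w) -> Rabs (A - B) <= K * Rabs D ->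
  Rabs ((A - B) / c) <= K * Rabs (u - w).
Proof.
  intros Hc HK HD H. rewrite HD, Rabs_mult, (Rabs_right c) in H by lra.
  unfold Rdiv. rewrite Rabs_mult, (Rabs_right (/ c)) by (left; apply Rinv_0_lt_compat; lra).
  apply Rmult_le_reg_r with c; auto. rewrite Rmult_assoc, Rinv_l by lra. nra.
Qed.

Lemma lift x : 0 <= x <= 1 -> (forall m', LipAt m' (Tmap x)) -> forall m, LipAt m x.
Proof.
  intros Hx H m.
  assert (Hgen : forall K', 0 <= K' -> forall p q, 0 <= p <= x -> x <= q <= 1 ->
    (forall n s, p <= s <= q -> Rabs (G lam (S n) m s - G lam (S n) m x) <= K' * Rabs (s - x)) ->
    (forall n t, 0 <= t <= 1 -> Rabs (G lam (S n) m t - G lam (S n) m p) <= W lam m * Rabs (t - p)) ->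
    (forall n t, 0 <= t <= 1 -> Rabs (G lam (S n) m t - G lam (S n) m q) <= W lam m * Rabs (t - q)) ->
    LipAt m x).
  { intros K' HK' p q Hp Hq Hin HP HQ. exists (Rmax K' (W lam m)). split.
    pose proof (Rmax_l K' (W lam m)); lra.
    intros [|n] t Ht.
    - apply Rle_trans with (W lam m * Rabs (t - x)). apply base_lip; auto.
      apply mulr_le. apply Rmax_r. apply Rabs_pos.
    - apply (glue (G lam (S n) m) p q); auto. apply W_pos. }
  destruct (Rlt_dec x (1/3)) as [r1|r1].
  - destruct (H m) as [K' [HK' HL]]. rewrite T0 in HL by lra.
    apply (Hgen K' HK' 0 (1/3)); try lra.
    + intros n s Hs. replace (G lam (S n) m s) with (G lam (S n) m (3 * s / 3)) by (f_equal; field).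
      replace (G lam (S n) m x) with (G lam (S n) m (3 * x / 3)) by (f_equal; field).
      rewrite !P0 by lra.
      replace (G lam n m (3 * s) / 3 - G lam n m (3 * x) / 3) with ((G lam n m (3 * s) - G lam n m (3 * x)) / 3) by field.
      apply sc with (3 * s - 3 * x); [lra|lra|ring|apply HL; lra].
    + intros n t Ht. apply BL0; auto.
    + intros n t Ht. apply BL13; auto.
  - destruct (Rlt_dec x (1/2)) as [r2|r2].
    + destruct (H (mu1 lam m)) as [K' [HK' HL]]. rewrite T1 in HL by lra.
      apply (Hgen K' HK' (1/3) (1/2)); try lra.
      * intros n s Hs. replace (G lam (S n) m s) with (G lam (S n) m (1/3 + (6 * s - 2) / 6)) by (f_equal; field).
        replace (G lam (S n) m x) with (G lam (S n) m (1/3 + (6 * x - 2) / 6)) by (f_equal; field).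
        rewrite !P1 by lra.
        replace (m / 3 + G lam n (mu1 lam m) (6 * s - 2) / 6 - (m / 3 + G lam n (mu1 lam m) (6 * x - 2) / 6))
          with ((G lam n (mu1 lam m) (6 * s - 2) - G lam n (mu1 lam m) (6 * x - 2)) / 6) by field.
        apply sc with (6 * s - 2 - (6 * x - 2)); [lra|lra|ring|apply HL; lra].
      * intros n t Ht. apply BL13; auto.
      * intros n t Ht. apply BL12; auto.
    + destruct (Rlt_dec x (2/3)) as [r3|r3].
      * destruct (H (- mu2 lam m)) as [K' [HK' HL]]. rewrite T2 in HL by lra.
        apply (Hgen K' HK' (1/2) (2/3)); try lra.
        -- intros n s Hs. replace (G lam (S n) m s) with (G lam (S n) m (1/2 + (6 * s - 3) / 6)) by (f_equal; field).
           replace (G lam (S n) m x) with (G lam (S n) m (1/2 + (6 * x - 3) / 6)) by (f_equal; field).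
           rewrite !P2 by lra.
           replace (6 * s - 3) with (1 - (4 - 6 * s)) by ring.
           replace (6 * x - 3) with (1 - (4 - 6 * x)) by ring.
           rewrite !refl by lra.
           replace (m / 2 + lam * sq m + (mu2 lam m + G lam n (- mu2 lam m) (4 - 6 * s)) / 6 -
             (m / 2 + lam * sq m + (mu2 lam m + G lam n (- mu2 lam m) (4 - 6 * x)) / 6))
             with ((G lam n (- mu2 lam m) (4 - 6 * s) - G lam n (- mu2 lam m) (4 - 6 * x)) / 6) by field.
           apply sc with ((4 - 6 * x) - (4 - 6 * s)); [lra|lra|ring|].
           rewrite (Rabs_minus_sym (4 - 6 * x)). apply HL; lra.
        -- intros n t Ht. apply BL12; auto.
        -- intros n t Ht. apply BL23; auto.
      * destruct (H m) as [K' [HK' HL]]. rewrite T3 in HL by lra.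
        apply (Hgen K' HK' (2/3) 1); try lra.
        -- intros n s Hs. replace (G lam (S n) m s) with (G lam (S n) m (2/3 + (3 * s - 2) / 3)) by (f_equal; field).
           replace (G lam (S n) m x) with (G lam (S n) m (2/3 + (3 * x - 2) / 3)) by (f_equal; field).
           rewrite !P3 by lra.
           replace (2 * m / 3 + G lam n m (3 * s - 2) / 3 - (2 * m / 3 + G lam n m (3 * x - 2) / 3))
             with ((G lam n m (3 * s - 2) - G lam n m (3 * x - 2)) / 3) by field.
           apply sc with (3 * s - 2 - (3 * x - 2)); [lra|lra|ring|apply HL; lra].
        -- intros n t Ht. apply BL23; auto.
        -- intros n t Ht. apply BL1; auto.
Qed.

Lemma lift_iter N : forall x, 0 <= x <= 1 -> (forall m, LipAt m (Nat.iter N Tmap x)) -> forall m, LipAt m x.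
Proof.
  induction N as [|N IH]; intros x Hx H m.
  - apply H.
  - apply lift; auto. intros m'. apply IH. apply T01; auto.
    intros m''. rewrite <- Nat.iter_succ_r. apply H.
Qed.

Lemma cantor_lip y : Cset y -> forall m, LipAt m y.
Proof.
  intros Hy m. exists (W lam m). split. apply W_pos. intros n t Ht. apply cantor; auto.
Qed.

End S.

Section S.
Variable lam : R.
Hypothesis Hlam : 1/6 < lam < 5/6.

Lemma sdiff k : forall m t0, 0 <= t0 <= 1 -> exists a b, 0 <= a <= t0 /\ t0 <= b <= 1 /\ 0 < b - a /\
  b - a <= (/3) ^ k /\ forall n, (k < n)%nat ->
  lam * (b - a) <= G lam n m ((a + b) / 2) - (G lam n m a + G lam n m b) / 2.
Proof.
  induction k as [|k IH]; intros m t0 Ht0.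
  - exists 0, 1. repeat split; try lra.
    intros n Hn. destruct n as [|n]; [lia|].
    replace ((0 + 1) / 2) with (1/2) by field. rewrite val12, G_at0, G_at1.
    pose proof (sq_ge1 m). pose proof (mull_le lam 1 (sq m) ltac:(lra) H). lra.
  - pose proof (pow_le (/3) k ltac:(lra)) as Hp. simpl pow.
    destruct (pieces t0 Ht0) as [[v [Hv ->]]|[[v [Hv ->]]|[[v [Hv ->]]|[v [Hv ->]]]]].
    + destruct (IH m v Hv) as [a [b [Ha [Hb [Hab [Hl Hsd]]]]]].
      exists (a / 3), (b / 3). repeat split; try lra.
      intros n Hn. destruct n as [|n]; [lia|]. specialize (Hsd n ltac:(lia)).
      replace ((a / 3 + b / 3) / 2) with (((a + b) / 2) / 3) by field.
      rewrite !P0 by lra. lra.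
    + destruct (IH (mu1 lam m) v Hv) as [a [b [Ha [Hb [Hab [Hl Hsd]]]]]].
      exists (1/3 + a / 6), (1/3 + b / 6). repeat split; try lra.
      intros n Hn. destruct n as [|n]; [lia|]. specialize (Hsd n ltac:(lia)).
      replace ((1/3 + a / 6 + (1/3 + b / 6)) / 2) with (1/3 + ((a + b) / 2) / 6) by field.
      rewrite !P1 by lra. lra.
    + destruct (IH (mu2 lam m) v Hv) as [a [b [Ha [Hb [Hab [Hl Hsd]]]]]].
      exists (1/2 + a / 6), (1/2 + b / 6). repeat split; try lra.
      intros n Hn. destruct n as [|n]; [lia|]. specialize (Hsd n ltac:(lia)).
      replace ((1/2 + a / 6 + (1/2 + b / 6)) / 2) with (1/2 + ((a + b) / 2) / 6) by field.
      rewrite !P2 by lra. lra.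
    + destruct (IH m v Hv) as [a [b [Ha [Hb [Hab [Hl Hsd]]]]]].
      exists (2/3 + a / 3), (2/3 + b / 3). repeat split; try lra.
      intros n Hn. destruct n as [|n]; [lia|]. specialize (Hsd n ltac:(lia)).
      replace ((2/3 + a / 3 + (2/3 + b / 3)) / 2) with (2/3 + ((a + b) / 2) / 3) by field.
      rewrite !P3 by lra. lra.
Qed.

End S.

Lemma lim_sd u1 u2 u3 l1 l2 l3 c n0 : Un_cv u1 l1 -> Un_cv u2 l2 -> Un_cv u3 l3 ->
  (forall n, (n0 < n)%nat -> c <= u2 n - (u1 n + u3 n) / 2) -> c <= l2 - (l1 + l3) / 2.
Proof.
  intros H1 H2 H3 H. destruct (Rle_dec c (l2 - (l1 + l3) / 2)) as [|Hn]; auto. exfalso.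
  set (e := (c - (l2 - (l1 + l3) / 2)) / 2).
  assert (He : e > 0) by (unfold e; lra).
  destruct (H1 e He) as [N1 HN1]. destruct (H2 e He) as [N2 HN2]. destruct (H3 e He) as [N3 HN3].
  set (n := S (N1 + N2 + N3 + n0)).
  specialize (HN1 n ltac:(unfold n; lia)). specialize (HN2 n ltac:(unfold n; lia)).
  specialize (HN3 n ltac:(unfold n; lia)). specialize (H n ltac:(unfold n; lia)).
  unfold Rdist in *. apply Rabs_def2 in HN1. apply Rabs_def2 in HN2. apply Rabs_def2 in HN3.
  unfold e in *. lra.
Qed.

Lemma lim_lip u v l1 l2 c : Un_cv u l1 -> Un_cv v l2 -> (forall n, Rabs (u n - v n) <= c) ->
  Rabs (l1 - l2) <= c.
Proof.
  intros H1 H2 H. destruct (Rle_dec (Rabs (l1 - l2)) c) as [|Hn]; auto. exfalso.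
  set (e := (Rabs (l1 - l2) - c) / 2).
  assert (He : e > 0) by (unfold e; lra).
  destruct (H1 e He) as [N1 HN1]. destruct (H2 e He) as [N2 HN2].
  specialize (HN1 (N1 + N2)%nat ltac:(lia)). specialize (HN2 (N1 + N2)%nat ltac:(lia)).
  specialize (H (N1 + N2)%nat). unfold Rdist in *.
  pose proof (Rabs_triang (l1 - u (N1 + N2)%nat) (u (N1 + N2)%nat - l2)).
  pose proof (Rabs_triang (u (N1 + N2)%nat - v (N1 + N2)%nat) (v (N1 + N2)%nat - l2)).
  rewrite Rabs_minus_sym in HN1.
  replace (l1 - u (N1 + N2)%nat + (u (N1 + N2)%nat - l2)) with (l1 - l2) in H0 by ring.
  replace (u (N1 + N2)%nat - v (N1 + N2)%nat + (v (N1 + N2)%nat - l2)) with (u (N1 + N2)%nat - l2) in H3 by ring.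
  unfold e in *. lra.
Qed.

Lemma pow_le1 u j : Rabs u <= 1 -> Rabs (u ^ j) <= 1.
Proof.
  intros H. rewrite <- RPow_abs. induction j as [|j IH]. simpl; lra.
  simpl. pose proof (Rabs_pos u). pose proof (pow_le (Rabs u) j H0).
  apply Rle_trans with (1 * 1). apply Rmult_le_compat; auto. lra.
Qed.

Lemma poly_approx (c : nat -> R) N : exists A A1 B0, 0 <= B0 /\ forall u, Rabs u <= 1 ->
  Rabs (sum_f_R0 (fun k => c k * u ^ k) N - A - A1 * u) <= B0 * u ^ 2.
Proof.
  induction N as [|N IH].
  - exists (c 0%nat), 0, 0. split; [lra|]. intros u Hu. simpl.
    replace (c 0%nat * 1 - c 0%nat - 0 * u) with 0 by ring. rewrite Rabs_R0. lra.
  - destruct IH as [A [A1 [B0 [HB H]]]]. destruct N as [|N].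
    + exists A, (A1 + c 1%nat), B0. split; auto. intros u Hu. specialize (H u Hu).
      simpl sum_f_R0. simpl sum_f_R0 in H.
      replace (c 0%nat * 1 + c 1%nat * (u * 1) - A - (A1 + c 1%nat) * u) with (c 0%nat * 1 - A - A1 * u) by ring.
      exact H.
    + exists A, A1, (B0 + Rabs (c (S (S N)))). split. pose proof (Rabs_pos (c (S (S N)))); lra.
      intros u Hu. specialize (H u Hu).
      change (sum_f_R0 (fun k => c k * u ^ k) (S (S N))) with
        (sum_f_R0 (fun k => c k * u ^ k) (S N) + c (S (S N)) * u ^ (S (S N))).
      replace (sum_f_R0 (fun k => c k * u ^ k) (S N) + c (S (S N)) * u ^ (S (S N)) - A - A1 * u)
        with ((sum_f_R0 (fun k => c k * u ^ k) (S N) - A - A1 * u) + c (S (S N)) * u ^ (S (S N))) by ring.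
      eapply Rle_trans. apply Rabs_triang.
      assert (Rabs (c (S (S N)) * u ^ (S (S N))) <= Rabs (c (S (S N))) * u ^ 2).
      { rewrite Rabs_mult. replace (u ^ (S (S N))) with (u ^ 2 * u ^ N) by (simpl; ring).
        rewrite Rabs_mult, (Rabs_right (u ^ 2)) by (apply Rle_ge, pow2_ge_0).
        pose proof (pow_le1 u N Hu). pose proof (Rabs_pos (c (S (S N)))). pose proof (pow2_ge_0 u).
        apply mull_le; auto. rewrite <- (Rmult_1_r (u ^ 2)) at 2. apply mull_le; auto. }
      lra.
Qed.

Lemma rpow0_le d l a : 0 <= d <= l -> 0 < l -> 0 <= a -> rpow0 d a <= Rpower l a.
Proof.
  intros Hd Hl Ha. unfold rpow0. destruct (Req_dec_T d 0).
  - unfold Rpower. left; apply exp_pos.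
  - apply Rle_Rpower_l; auto. lra.
Qed.

Lemma upper (lam : R) (Hlam : 1/6 < lam < 5/6) (F : R -> R)
  (HF : forall x, in01 x -> Un_cv (fun n => G lam n 0 x) (F x)) x0 (Hx0 : in01 x0) :
  forall alpha, 0 <= alpha /\ Calpha F alpha x0 -> alpha <= 1.
Proof.
  intros alpha [Ha [N [c [C [delta [HN [HC [Hd HE]]]]]]]].
  destruct (Rle_dec alpha 1) as [|Hal]; auto. exfalso.
  destruct (poly_approx c N) as [A [A1 [B0 [HB0 HP]]]].
  set (eta1 := lam / (8 * B0 + 8)).
  set (eta2 := Rpower (lam / (8 * C)) (/ (alpha - 1))).
  assert (He1 : 0 < eta1) by (unfold eta1; apply Rdiv_lt_0_compat; lra).
  assert (He2 : 0 < eta2) by (unfold eta2, Rpower; apply exp_pos).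
  set (eps := Rmin (Rmin eta1 eta2) (Rmin delta 1)).
  assert (Heps : 0 < eps) by (unfold eps; repeat apply Rmin_glb_lt; lra).
  destruct (pow_lt_1_zero (/3) ltac:(rewrite Rabs_right; lra) eps Heps) as [k Hk].
  specialize (Hk k (le_n k)). rewrite Rabs_right in Hk by (apply Rle_ge, pow_le; lra).
  destruct Hx0 as [Hx0a Hx0b].
  destruct (sdiff lam Hlam k 0 x0 ltac:(lra)) as [a [b [Ha' [Hb' [Hab [Hl Hsd]]]]]].
  set (l := b - a). set (mid := (a + b) / 2).
  assert (Hl1 : l <= eta1) by (unfold l, eps in *; pose proof (Rmin_l (Rmin eta1 eta2) (Rmin delta 1)); pose proof (Rmin_l eta1 eta2); lra).
  assert (Hl2 : l <= eta2) by (unfold l, eps in *; pose proof (Rmin_l (Rmin eta1 eta2) (Rmin delta 1)); pose proof (Rmin_r eta1 eta2); lra).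
  assert (Hl3 : l < delta) by (unfold l, eps in *; pose proof (Rmin_r (Rmin eta1 eta2) (Rmin delta 1)); pose proof (Rmin_l delta 1); lra).
  assert (Hl4 : l <= 1) by (unfold l, eps in *; pose proof (Rmin_r (Rmin eta1 eta2) (Rmin delta 1)); pose proof (Rmin_r delta 1); lra).
  assert (Hlpos : 0 < l) by (unfold l; lra).
  assert (HS : lam * l <= F mid - (F a + F b) / 2).
  { apply (lim_sd (fun n => G lam n 0 a) (fun n => G lam n 0 mid) (fun n => G lam n 0 b) _ _ _ _ k).
    apply HF; split; lra. apply HF; unfold mid; split; lra. apply HF; split; lra. exact Hsd. }
  set (P := fun y => sum_f_R0 (fun j => c j * (y - x0) ^ j) N).
  assert (HEy : forall y, 0 <= y <= 1 -> Rabs (y - x0) <= l -> Rabs (F y - P y) <= C * Rpower l alpha).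
  { intros y Hy Hyl. unfold P. eapply Rle_trans. apply HE. exact Hy. lra.
    apply mull_le. lra. apply rpow0_le; auto. split; auto. apply Rabs_pos. }
  assert (HPy : forall y, Rabs (y - x0) <= l -> Rabs (P y - A - A1 * (y - x0)) <= B0 * l ^ 2).
  { intros y Hyl. unfold P. eapply Rle_trans. apply HP. lra.
    apply mull_le; auto. pose proof (abs_facts (y - x0)). pose proof (Rabs_pos (y - x0)). nra. }
  assert (Da : Rabs (a - x0) <= l) by (rewrite absd1 by lra; unfold l; lra).
  assert (Db : Rabs (b - x0) <= l) by (rewrite absd2 by lra; unfold l; lra).
  assert (Dm : Rabs (mid - x0) <= l) by (unfold mid; apply abs_in; unfold l; lra).
  pose proof (HEy a ltac:(lra) Da) as E1. pose proof (HEy b ltac:(lra) Db) as E2.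
  pose proof (HEy mid ltac:(unfold mid; lra) Dm) as E3.
  pose proof (HPy a Da) as Q1. pose proof (HPy b Db) as Q2. pose proof (HPy mid Dm) as Q3.
  apply abs_el in E1, E2, E3, Q1, Q2, Q3.
  assert (HR : Rpower l alpha = l * Rpower l (alpha - 1)).
  { replace alpha with (1 + (alpha - 1)) at 1 by ring. rewrite Rpower_plus, Rpower_1; auto. }
  assert (HX : Rpower l (alpha - 1) <= lam / (8 * C)).
  { apply Rle_trans with (Rpower eta2 (alpha - 1)). apply Rle_Rpower_l; lra.
    unfold eta2. rewrite Rpower_mult. replace (/ (alpha - 1) * (alpha - 1)) with 1 by (field; lra).
    rewrite Rpower_1. lra. apply Rdiv_lt_0_compat; lra. }
  assert (HX2 : 2 * C * Rpower l (alpha - 1) <= lam / 4).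
  { apply Rle_trans with (2 * C * (lam / (8 * C))). apply mull_le; lra. right; field; lra. }
  assert (HB2 : 2 * B0 * l <= lam / 4).
  { apply Rle_trans with (2 * B0 * eta1). apply mull_le; lra. unfold eta1.
    apply Rmult_le_reg_r with (8 * B0 + 8). lra. field_simplify; nra. }
  assert (Hmid : mid - x0 = ((a - x0) + (b - x0)) / 2) by (unfold mid; field).
  rewrite HR in E1, E2, E3.
  pose proof (mull_le l _ _ ltac:(lra) HX2). pose proof (mull_le l _ _ ltac:(lra) HB2).
  assert (A1 * (mid - x0) = (A1 * (a - x0) + A1 * (b - x0)) / 2) by (rewrite Hmid; field).
  nra.
Qed.

Lemma iter01 N x : 0 <= x <= 1 -> 0 <= Nat.iter N Tmap x <= 1.
Proof. induction N as [|N IH]; intros Hx; simpl; auto. apply T01; auto. Qed.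

Lemma etilde_cset x0 : in01 x0 -> in_Etilde x0 -> exists N, Cset (Nat.iter N Tmap x0).
Proof.
  intros Hx [N HN]. exists N. split. apply iter01; auto.
  intros k. rewrite <- Nat.iter_add.
  assert (H1 : beta12 x0 (S (k + N)) = beta12 x0 (k + N)).
  { rewrite (HN (S (k + N))) by lia. rewrite (HN (k + N)%nat) by lia. reflexivity. }
  simpl in H1. unfold u in H1.
  destruct (Umap_vals (Nat.iter (k + N) Tmap x0)) as [H|[H|[H|H]]]; rewrite H in H1; simpl in H1; auto; lia.
Qed.

Theorem proposition3p11 :
  forall (lam : R), 1/6 < lam < 5/6 ->
  forall (F : R -> R),
    (forall x, in01 x -> Un_cv (fun n => Flam_n lam n x) (F x)) ->
  forall x0, in01 x0 ->
    Rbar_le (holder_exponent F x0) (Finite 1) /\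
    (in_Etilde x0 -> holder_exponent F x0 = Finite 1).
Proof.
  intros lam Hlam F HF x0 Hx0.
  assert (HF' : forall x, in01 x -> Un_cv (fun n => G lam n 0 x) (F x)) by exact HF.
  assert (H1 : Rbar_le (holder_exponent F x0) (Finite 1)).
  { unfold holder_exponent. destruct (Lub_Rbar_correct (fun alpha => 0 <= alpha /\ Calpha F alpha x0)) as [_ Hl].
    apply Hl. intros alpha Ha. simpl. apply (upper lam Hlam F HF' x0 Hx0 alpha Ha). }
  split; auto.
  intros HE. apply Rbar_le_antisym; auto.
  destruct (etilde_cset x0 Hx0 HE) as [N HC].
  destruct (lift_iter lam Hlam N x0 Hx0 (fun m => cantor_lip lam Hlam _ HC m) 0) as [K [HK HL]].
  assert (HLF : forall t, in01 t -> Rabs (F t - F x0) <= K * Rabs (t - x0)).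
  { intros t Ht. apply (lim_lip (fun n => G lam n 0 t) (fun n => G lam n 0 x0)); auto. }
  assert (HCa : Calpha F 1 x0).
  { exists 0%nat, (fun _ => F x0), (K + 1), 1. split. simpl; lra. split. lra. split. lra.
    intros x Hx Hd. simpl. replace (F x - F x0 * 1) with (F x - F x0) by ring.
    unfold rpow0. destruct (Req_dec_T (Rabs (x - x0)) 0) as [Hz|Hz].
    - assert (x = x0). { destruct (Req_dec x x0); auto. exfalso. apply Rabs_no_R0 in Hz; auto. lra. }
      subst. rewrite Rminus_diag, Rabs_R0. lra.
    - rewrite Rpower_1. pose proof (HLF x Hx). pose proof (Rabs_pos (x - x0)). nra.
      pose proof (Rabs_pos (x - x0)). lra. }
  unfold holder_exponent. destruct (Lub_Rbar_correct (fun alpha => 0 <= alpha /\ Calpha F alpha x0)) as [Hu _].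
  apply Hu. split; [lra | exact HCa].
Qed.
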